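(* Let $n,m,m'\in\mathbb{N}$ with $\gcd(m,m')=1$, and let $\{R_j\}_{j\in J}$ be a system of representatives of the right cosets in $\Gamma_0(mm'n)\backslash\Gamma_0(mn)$. Then $\{B_mR_jB_m^{-1}\}_{j\in J}$ is a system of representatives of the right cosets in $\Gamma_0(m'n)\backslash\Gamma_0(n)$.
   Context: $B_m=\begin{pmatrix}m&0\\0&1\end{pmatrix}$; $\Gamma_0(N)=\{\begin{pmatrix}a&b\\c&d\end{pmatrix}\in SL(2,\mathbb{Z}):N\mid c\}$. A system of representatives $\{R_j\}$ of the right cosets in $H\backslash G$ means $G=\bigsqcup_jHR_j$ (disjoint union). *)

(* Defs.v *)
From HB Require Import structures.
From mathcomp Require Import all_boot all_order all_algebra.
Set Implicit Arguments. Unset Strict Implicit. Unset Printing Implicit Defensive.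
Import Order.TTheory GRing.Theory Num.Theory.
Local Open Scope ring_scope.

(* 2x2 matrices over Q; SL(2,Z) and its congruence subgroups are viewed as
   subsets of 'M[rat]_2, so that B_m^{-1} makes sense. *)
Definition mx2 := 'M[rat]_2.

Definition integral_mx (A : mx2) : Prop :=
  forall i j : 'I_2, exists z : int, A i j = z%:~R.

Definition SL2Z (A : mx2) : Prop := integral_mx A /\ \det A = 1.

Definition Gamma0 (N : nat) (A : mx2) : Prop :=
  SL2Z A /\ exists z : int, A ord_max ord0 = (N%:Z * z)%:~R.

Definition Bm (m : nat) : mx2 :=
  \matrix_(i < 2, j < 2) (if i == j then (if i == ord0 then m%:R else 1) else 0).

Definition right_coset_reps (H G : mx2 -> Prop) (J : Type) (R : J -> mx2) : Prop :=
  (forall g, G g <-> exists j, exists h, H h /\ g = h *m R j) /\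
  (forall j k, j <> k -> forall g,
      (exists h, H h /\ g = h *m R j) -> (exists h, H h /\ g = h *m R k) -> False).

(* Main.v *)
Require Import Defs.
From HB Require Import structures.
From mathcomp Require Import all_boot all_order all_algebra.
From mathcomp Require Import ring.
Import Order.TTheory GRing.Theory Num.Theory.
Local Open Scope ring_scope.
Lemma coprime_byp (x m : nat) : (0 < m)%N ->
  (forall p, prime p -> (p %| x)%N -> (p %| m)%N -> False) -> coprime x m.
Proof.
move=> m0 H; rewrite /coprime; case: (ltngtP (gcdn x m) 1) => //.
- rewrite ltnS leqn0 => /eqP g0; have := gcdn_gt0 x m; by rewrite g0 m0 orbT.
- move=> /pdivP[p pp pd]; exfalso; apply: (H p pp).
  + exact: dvdn_trans pd (dvdn_gcdl _ _).
  + exact: dvdn_trans pd (dvdn_gcdr _ _).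
Qed.

Lemma pz (p : nat) (x : int) : (p%:Z %| x)%Z = (p %| `|x|)%N.
Proof. by rewrite dvdzE. Qed.

Lemma NT (d M : int) (m : nat) : (0 < m)%N ->
  (forall p : nat, prime p -> (p %| m)%N -> (p%:Z %| d)%Z -> (p%:Z %| M)%Z -> False) ->
  exists k : int, coprimez (d + M * k) m.
Proof.
move=> m0 H.
pose t := (\prod_(p <- primes m | ~~ (p %| `|d|)%N) p)%N.
exists t%:Z; rewrite coprimezE /=; apply: coprime_byp => // p pp pdx pm.
have pdx' : (p%:Z %| d + M * t%:Z)%Z by rewrite pz.
have ptE : (p %| t)%N = ~~ (p %| `|d|)%N.
  rewrite /t (Euclid_dvd_prod _ _ _ pp) big_has_cond.
  apply/hasP/idP.
  - case=> q qin /andP[/= qd pq].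
    move: qin; rewrite mem_primes => /andP[qp _].
    by move: pq; rewrite dvdn_prime2 // => /eqP->.
  - move=> nd; exists p; first by rewrite mem_primes pp m0.
    by rewrite /= nd dvdnn.
case pd: (p %| `|d|)%N.
- have pMt : (p%:Z %| M * t%:Z)%Z.
    by have := rpredB pdx' (_ : (p%:Z %| d)%Z); rewrite addrC addKr; apply; rewrite pz.
  move: pMt; rewrite pz abszM Euclid_dvdM // => /orP[pM|pt].
  + by apply: (H p pp pm); rewrite pz.
  + by move: pt; rewrite absz_nat ptE pd.
- have pMt : (p%:Z %| M * t%:Z)%Z by apply: dvdz_mull; rewrite pz absz_nat ptE pd.
  have := rpredB pdx' pMt; rewrite addrK pz => pd'.
  by rewrite pd' in pd.
Qed.
Definition mk (a b c d : rat) : 'M[rat]_2 :=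
  \matrix_(i < 2, j < 2) if i == 0 then (if j == 0 then a else b) else (if j == 0 then c else d).

Lemma mkE (A : 'M[rat]_2) : A = mk (A 0 0) (A 0 1) (A 1 0) (A 1 1).
Proof. by apply/matrixP => i j; rewrite mxE; case: i => [[|[|//]]] ?; case: j => [[|[|//]]] ? /=;
  congr (A _ _); apply: val_inj. Qed.

Lemma mk_mul a b c d a' b' c' d' : mk a b c d *m mk a' b' c' d' =
  mk (a*a'+b*c') (a*b'+b*d') (c*a'+d*c') (c*b'+d*d').
Proof. by apply/matrixP => i j; rewrite !mxE !big_ord_recl big_ord0 !mxE; case: i => [[|[|//]]] ?; case: j => [[|[|//]]] ? /=; rewrite addr0. Qed.

Lemma mk_det a b c d : \det (mk a b c d) = a * d - b * c.
Proof.
rewrite (expand_det_row _ 0) !big_ord_recl big_ord0 /cofactor !det_mx11 !mxE /=.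
rewrite !expr0 !expr1 /=. ring.
Qed.

Lemma mk_inj a b c d a' b' c' d' : mk a b c d = mk a' b' c' d' ->
  [/\ a = a', b = b', c = c' & d = d'].
Proof.
move=> E; have F i j := congr1 (fun M : 'M[rat]_2 => M i j) E.
by have := F 0 0; have := F 0 1; have := F 1 0; have := F 1 1; rewrite !mxE /= => -> -> -> ->.
Qed.
Definition mkz (a b c d : int) := mk a%:~R b%:~R c%:~R d%:~R.

Lemma mkz_mul a b c d a' b' c' d' : mkz a b c d *m mkz a' b' c' d' =
  mkz (a*a'+b*c') (a*b'+b*d') (c*a'+d*c') (c*b'+d*d').
Proof. by rewrite /mkz mk_mul !(intrD, intrM). Qed.

Lemma ord1E : (1 : 'I_2) = ord_max. Proof. exact: val_inj. Qed.
Lemma G0P N A : Gamma0 N A <-> exists a b c d : int,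
  A = mkz a b (N%:Z * c) d /\ a * d - b * (N%:Z * c) = 1.
Proof.
split.
- case=> [[Hi Hd] [z Hz]].
  have [a Ha] := Hi 0 0; have [b Hb] := Hi 0 1; have [d Hdd] := Hi 1 1.
  exists a, b, z, d; have EA : A = mkz a b (N%:Z * z) d.
    by rewrite (mkE A) /mkz -Ha -Hb -Hdd ord1E -Hz.
  split => //; apply: (@intr_inj rat); move: Hd; rewrite EA /mkz mk_det.
  by rewrite !(intrD, intrM, intrN) => ->.
- case=> [a [b [c [d [-> Hd]]]]]; split; last by exists c; rewrite -ord1E /mkz mxE.
  split; last by rewrite /mkz mk_det -!intrM -intrB Hd.
  by move=> i j; rewrite /mkz mxE; case: ifP => _; case: ifP => _; eexists.
Qed.

Lemma mk1 : (1%:M : 'M[rat]_2) = mkz 1 0 0 1.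
Proof. by apply/matrixP => i j; rewrite !mxE; case: i => [[|[|//]]] ?; case: j => [[|[|//]]] ?. Qed.

Lemma G0_1 N : Gamma0 N 1%:M.
Proof. apply/G0P; exists 1, 0, 0, 1; by rewrite mk1 mulr0. Qed.

Lemma G0_mul N x y : Gamma0 N x -> Gamma0 N y -> Gamma0 N (x *m y).
Proof.
move=> /G0P[a [b [c [d [-> H1]]]]] /G0P[a' [b' [c' [d' [-> H2]]]]].
apply/G0P; rewrite mkz_mul.
exists (a*a'+b*(N%:Z*c')), (a*b'+b*d'), (c*a'+d*c'), ((N%:Z*c)*b'+d*d').
split; first by congr mkz; ring.
have -> : (a * a' + b * (N%:Z * c')) * ((N%:Z * c) * b' + d * d') -
    (a * b' + b * d') * (N%:Z * (c * a' + d * c')) =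
    (a * d - b * (N%:Z * c)) * (a' * d' - b' * (N%:Z * c')) by ring.
by rewrite H1 H2 mulr1.
Qed.

Lemma G0_inv N x : Gamma0 N x -> x \in unitmx /\ Gamma0 N (invmx x).
Proof.
move=> /G0P[a [b [c [d [Ex H1]]]]].
have U : x \in unitmx by rewrite unitmxE Ex /mkz mk_det -!intrM -intrB H1 unitr1.
split => //.
have -> : invmx x = mkz d (-b) (- (N%:Z * c)) a.
  have E : mkz d (-b) (- (N%:Z * c)) a *m x = 1%:M.
    rewrite Ex mkz_mul mk1; congr mkz; rewrite -?H1; ring.
  by rewrite -[RHS]mulmx1 -(mulmxV U) mulmxA E mul1mx.
apply/G0P; exists d, (-b), (-c), a; split; first by rewrite mulrN.
by rewrite -H1; ring.
Qed.

Lemma G0_sub N N' x : (N %| N')%N -> Gamma0 N' x -> Gamma0 N x.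
Proof.
move=> /dvdnP[k ->] /G0P[a [b [c [d [-> H1]]]]].
apply/G0P; exists a, b, (k%:Z * c), d; rewrite PoszM -mulrA mulrCA; split => //.
by rewrite -H1; congr (_ - _); ring.
Qed.

Definition Bi (m : nat) := mk (m%:R)^-1 0 0 1.

Lemma BmE m : Bm m = mk m%:R 0 0 1.
Proof. by apply/matrixP => i j; rewrite !mxE; case: i => [[|[|//]]] ?; case: j => [[|[|//]]] ?. Qed.

Lemma BiE m : (0 < m)%N -> invmx (Bm m) = Bi m.
Proof.
move=> m0; have mn0 : (m%:R : rat) != 0 by rewrite pnatr_eq0 -lt0n.
have U : Bm m \in unitmx by rewrite unitmxE BmE mk_det mulr1 mulr0 subr0 unitfE.
have E : Bi m *m Bm m = 1%:M.
  rewrite BmE /Bi mk_mul mk1 /mkz; congr mk; rewrite ?mulr0 ?mul0r ?addr0 ?add0r ?mulr1 //.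
  by rewrite mulVf.
by rewrite -[RHS]mulmx1 -(mulmxV U) mulmxA E mul1mx.
Qed.

Lemma conjE m a b c d : (0 < m)%N ->
  Bm m *m mk a b c d *m invmx (Bm m) = mk a (m%:R * b) (c / m%:R) d.
Proof.
move=> m0; have mn0 : (m%:R : rat) != 0 by rewrite pnatr_eq0 -lt0n.
rewrite BiE // BmE /Bi !mk_mul; congr mk; field; rewrite ?pnatr_eq0 -?lt0n //.
Qed.

Lemma G0_conj m N x : (0 < m)%N -> Gamma0 (m * N) x ->
  Gamma0 N (Bm m *m x *m invmx (Bm m)).
Proof.
move=> m0 /G0P[a [b [c [d [-> H1]]]]].
have mn0 : (m%:R : rat) != 0 by rewrite pnatr_eq0 -lt0n.
rewrite /mkz conjE //; apply/G0P; exists a, (m%:Z * b), c, d; split.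
  have mz : (m%:Z)%:~R = (m%:R : rat) by [].
  rewrite /mkz; congr mk; rewrite ?PoszM !intrM ?mz //.
  field; rewrite ?pnatr_eq0 -?lt0n //.
by rewrite -H1 PoszM; ring.
Qed.

Lemma G0_back m N z : (0 < m)%N -> Gamma0 1 z ->
  Gamma0 N (Bm m *m z *m invmx (Bm m)) -> Gamma0 (m * N) z.
Proof.
move=> m0 /G0P[a [b [c [d [Ez H1]]]]].
have mn0 : (m%:R : rat) != 0 by rewrite pnatr_eq0 -lt0n.
rewrite Ez /mkz conjE // => /G0P[a' [b' [c' [d' [E H2]]]]].
move: E; rewrite /mkz => /mk_inj[_ _ Ec _].
have Ec' : 1%:Z * c = (m * N)%N%:Z * c'.
  have mz : (m%:Z)%:~R = (m%:R : rat) by [].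
  apply: (@intr_inj rat); rewrite PoszM -mulrA (intrM _ m%:Z) -Ec mz.
  field; rewrite ?pnatr_eq0 -?lt0n //.
apply/G0P; exists a, b, c', d; rewrite -Ec'; split => //.
Qed.

Arguments G0_inv {N x}. Arguments G0_sub {N N' x}. Arguments G0_mul {N x y}.
Arguments G0_conj {m N x}. Arguments G0_back {m N z}.

Lemma L_surj n m m' g : (0 < m)%N -> coprime m m' -> Gamma0 n g ->
  exists h x, Gamma0 (m' * n) h /\ Gamma0 (m * n) x /\
    g = h *m (Bm m *m x *m invmx (Bm m)).
Proof.
move=> m0 cop /G0P[a [b [c0 [d [-> H1]]]]].
have [k Hk] : exists k : int, coprimez (d + (m' * n)%N%:Z * b * k) m.
  apply: (@NT d ((m' * n)%N%:Z * b) m m0).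
  move=> p pp pm pd; rewrite pz abszM absz_nat !Euclid_dvdM // -orbA.
  case/or3P => [pm'|pn|pb].
  - by have := dvdn_gcd p m m'; rewrite pm pm' (eqP cop) Euclid_dvd1.
  - have : (p%:Z %| a * d - b * (n%:Z * c0))%Z.
      apply: rpredB; first exact: dvdz_mull.
      by apply: dvdz_mull; apply: dvdz_mulr; rewrite pz.
    by rewrite H1 pz Euclid_dvd1.
  - have : (p%:Z %| a * d - b * (n%:Z * c0))%Z.
      apply: rpredB; first exact: dvdz_mull.
      by apply: dvdz_mulr; rewrite pz.
    by rewrite H1 pz Euclid_dvd1.
move/coprimezP: Hk => [[u v] /= Huv].
pose K := (m' * n)%N%:Z * k.
pose s := - b * u.
pose cq := m'%:Z * k * a + c0.
pose A' := (1 + s * K) * a + s * (n%:Z * c0).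
pose D' := K * b + d.
have Huv' : v * m%:Z = 1 - u * (d + (m' * n)%N%:Z * b * k) by rewrite -Huv; ring.
have E : m%:Z * (b * v) = (1 + s * K) * b + s * d.
  transitivity (b * (v * m%:Z)); first ring.
  by rewrite Huv' /s /K; ring.
exists (mkz 1 (- s) (- K) (1 + s * K)), (mkz A' (b * v) ((m * n)%N%:Z * cq) D').
split; [|split].
- apply/G0P; exists 1, (- s), (- k), (1 + s * K); split.
    by rewrite /K mulrN.
  by rewrite /K; ring.
- apply/G0P; exists A', (b * v), cq, D'; split => //.
  transitivity (A' * D' - (m%:Z * (b * v)) * (n%:Z * cq)).
    by rewrite PoszM; ring.
  rewrite E /A' /D' /cq /K /s PoszM; rewrite -[RHS]H1; ring.
- have -> : Bm m *m mkz A' (b * v) ((m * n)%N%:Z * cq) D' *m invmx (Bm m)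
           = mkz A' (m%:Z * (b * v)) (n%:Z * cq) D'.
    have mz : (m%:Z)%:~R = (m%:R : rat) by [].
    rewrite /mkz conjE //; congr mk; rewrite ?PoszM !intrM ?mz //.
    field; rewrite ?pnatr_eq0 -?lt0n //.
  rewrite E mkz_mul; congr mkz; rewrite /A' /D' /cq /K /s PoszM; ring.
Qed.

Theorem mainTheorem11 (n m m' : nat) (J : Type) (R : J -> mx2) :
  (0 < n)%N -> (0 < m)%N -> (0 < m')%N -> coprime m m' ->
  right_coset_reps (Gamma0 (m * m' * n)) (Gamma0 (m * n)) R ->
  right_coset_reps (Gamma0 (m' * n)) (Gamma0 n)
    (fun j => Bm m *m R j *m invmx (Bm m)).
Proof.
move=> n0 m0 m'0 cop [H1 H2].
have Rin j : Gamma0 (m * n) (R j).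
  by apply/H1; exists j, 1%:M; split; [apply: G0_1 | rewrite mul1mx].
have U : Bm m \in unitmx.
  by rewrite unitmxE BmE mk_det mulr1 mulr0 subr0 unitfE pnatr_eq0 -lt0n.
have BV : invmx (Bm m) *m Bm m = 1%:M by rewrite mulVmx.
split.
- move=> g; split.
  + move=> Hg; have [h [x [Hh [Hx ->]]]] := @L_surj n m m' g m0 cop Hg.
    have [j [h0 [Hh0 ->]]] := (H1 x).1 Hx.
    exists j, (h *m (Bm m *m h0 *m invmx (Bm m))); split.
      apply: G0_mul => //; apply: G0_conj => //; by rewrite mulnA.
    by rewrite !mulmxA -(mulmxA _ (invmx (Bm m)) (Bm m)) BV mulmx1.
  + move=> [j [h [Hh ->]]]; apply: G0_mul.
      by apply: G0_sub Hh; apply: dvdn_mull.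
    by apply: G0_conj => //; apply: Rin.
- move=> j k jk g [h1 [Hh1 E1]] [h2 [Hh2 E2]].
  have [Uj Rji] := G0_inv (Rin j).
  have [Uh2 h2i] := G0_inv Hh2.
  pose z := R k *m invmx (R j).
  have z1 : Gamma0 1 z.
    apply: G0_mul; first exact: G0_sub (dvd1n _) (Rin k).
    exact: G0_sub (dvd1n _) Rji.
  have Ez : Bm m *m z *m invmx (Bm m) = invmx h2 *m h1.
    have Bu : Bm m \is a GRing.unit := U.
    have Rju : R j \is a GRing.unit := Uj.
    have h2u : h2 \is a GRing.unit := Uh2.
    move: E1 E2; rewrite /z !mulmxE.
    change (invmx (Bm m)) with (Bm m)^-1; change (invmx (R j)) with (R j)^-1;
    change (invmx h2) with h2^-1 => -> E.
    apply: (mulrI h2u); rewrite mulVKr //.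
    rewrite !mulrA; rewrite !mulrA in E.
    have E' : h2 * Bm m * R k = h1 * Bm m * R j.
      by rewrite -[LHS](mulrVK Bu) -E mulrVK.
    by rewrite E' mulrK // mulrK.
  have zG : Gamma0 (m * m' * n) z.
    rewrite -mulnA; apply: G0_back => //; rewrite Ez.
    exact: G0_mul.
  apply: (H2 j k jk (R k)).
    exists z; split => //; by rewrite /z -mulmxA mulVmx // mulmx1.
  by exists 1%:M; split; [apply: G0_1 | rewrite mul1mx].
Qed.
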